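(* Let $\Omega\subset\mathbb{R}^n$ be a bounded convex domain with smooth boundary and let $u$ be a given external potential on $\Omega$. Let $U_1$ and $U_2$ be two solutions of $$-\Delta U(x)=\frac{e^{-(U(x)+u(x))}}{\int_\Omega e^{-(U(y)+u(y))}\,dy}\quad\text{in }\Omega,\qquad U=0\ \text{on }\partial\Omega,$$ and set $I_i:=\int_\Omega \exp(-u-U_i)\,dx$ for $i=1,2$. If $I_1\ge I_2$, then $U_1(x)\le U_2(x)$ for all $x\in\Omega$. In particular, if $I_1=I_2$, then $U_1(x)=U_2(x)$ for all $x\in\Omega$. *)

(* Defs.v *)
From HB Require Import structures.
From mathcomp Require Import all_boot all_order all_algebra.
From mathcomp Require Import all_classical all_reals all_analysis.
Set Implicit Arguments. Unset Strict Implicit. Unset Printing Implicit Defensive.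
Import Order.TTheory GRing.Theory Num.Theory.
Import numFieldNormedType.Exports.
Local Open Scope classical_set_scope.
Local Open Scope ring_scope.

(* R^n is modelled by row vectors 'rV[R]_n; e_i is the i-th standard basis vector. *)
Definition ebasis {R : realType} {n : nat} (i : 'I_n) : 'rV[R]_n := delta_mx 0 i.

Definition partial {R : realType} {n : nat} (i : 'I_n) (f : 'rV[R]_n -> R) :
  'rV[R]_n -> R := 'D_(ebasis i) f.

Definition laplacian {R : realType} {n : nat} (f : 'rV[R]_n -> R) (x : 'rV[R]_n) : R :=
  \sum_(i < n) partial i (partial i f) x.

Definition C2_on {R : realType} {n : nat} (D : set 'rV[R]_n) (f : 'rV[R]_n -> R) :=
  [/\ forall x, D x -> differentiable f x,
      forall i x, D x -> differentiable (partial i f) x &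
      forall i j, {within D, continuous (partial j (partial i f))}].

Fixpoint Ck {R : realType} {n : nat} (k : nat) (f : 'rV[R]_n -> R) : Prop :=
  match k with
  | 0 => continuous f
  | k'.+1 => (forall x, differentiable f x) /\ forall i, Ck k' (partial i f)
  end.
Definition smooth {R : realType} {n : nat} (f : 'rV[R]_n -> R) := forall k, Ck k f.

Definition smooth_boundary {R : realType} {n : nat} (Omega : set 'rV[R]_n) :=
  forall p, (closure Omega `\` Omega) p ->
    exists (r : R) (phi : 'rV[R]_n -> R),
      [/\ 0 < r, smooth phi,
          (forall x, ball p r x -> (Omega x <-> (phi x < 0))) &
          exists i, partial i phi p != 0].

Definition bounded_convex_smooth_domain {R : realType} {n : nat}
    (Omega : set 'rV[R]_n) :=
  [/\ open Omega /\ Omega !=set0, connected Omega, bounded_set Omega,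
      convex_set (Omega : set (convex_lmodType 'rV[R]_n)) & smooth_boundary Omega].

Definition vcons {R : realType} {n : nat} (t : R) (v : 'rV[R]_n) : 'rV[R]_n.+1 :=
  \row_(j < n.+1) match unlift ord0 j with Some k => v 0 k | None => t end.

(* n-dimensional Lebesgue integral of a function with values in \bar R,
   computed as the iterated one-dimensional Lebesgue integral (by Tonelli this
   is the integral w.r.t. n-dimensional Lebesgue measure for nonnegative
   measurable integrands, the only case used below). *)
Fixpoint lebesgue_int_n {R : realType} (n : nat) : ('rV[R]_n -> \bar R) -> \bar R :=
  match n with
  | 0 => fun f => f 0
  | n'.+1 => fun f =>
      (\int[@lebesgue_measure R]_(t in [set: R])
          lebesgue_int_n (fun v : 'rV[R]_n' => f (vcons t v)))%E
  end.

Definition Ipot {R : realType} {n : nat} (Omega : set 'rV[R]_n)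
    (u U : 'rV[R]_n -> R) : \bar R :=
  lebesgue_int_n (fun x => if `[< Omega x >] then (expR (- (U x + u x)))%:E else 0%E).

Definition is_solution {R : realType} {n : nat} (Omega : set 'rV[R]_n)
    (u U : 'rV[R]_n -> R) :=
  [/\ C2_on Omega U,
      {within closure Omega, continuous U},
      (forall x, (closure Omega `\` Omega) x -> U x = 0),
      (0 < Ipot Omega u U < +oo)%E &
      forall x, Omega x ->
        - laplacian U x = expR (- (U x + u x)) / fine (Ipot Omega u U)].

(* Main.v *)
Require Import Defs.
From HB Require Import structures.
From mathcomp Require Import all_boot all_order all_algebra.
From mathcomp Require Import all_classical all_reals all_analysis.
Import Order.TTheory GRing.Theory Num.Theory.
Import numFieldNormedType.Exports.
Local Open Scope classical_set_scope.
Local Open Scope ring_scope.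

Lemma key1d (R : realType) (g q : R -> R) (c d : R) :
  0 < d ->
  (forall t : R, `|t| < d -> g t <= g 0) ->
  (forall t : R, `|t| < d -> is_derive t (1:R) g (q t)) ->
  (fun h => h^-1 * (q h - q 0)) @ 0^' --> c ->
  c <= 0.
Proof.
move=> d0 gmax gder qc.
rewrite leNgt; apply/negP => c0.
have := cvgr_gt _ qc _ c0.
move=> H; have H2 : nbhs (0:R) (fun x => x != 0 -> 0 < x^-1*(q x - q 0)) := H (dnbhs_filter _).
have [e /= e0 He] := iffLR (nbhs_ballP _ _) H2.
have Hq h : 0 < `|h| < Num.min d e -> 0 < h^-1 * (q h - q 0).
  move=> /andP[h0 hlt]; apply: He; last by rewrite -normr_gt0.
  rewrite /ball /= sub0r normrN; apply: lt_le_trans hlt _; by rewrite ge_min lexx orbT.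
set t := Num.min d e / 2.
have m0 : 0 < Num.min d e by rewrite lt_min d0 e0.
have t0 : 0 < t by rewrite divr_gt0.
have tlt : t < Num.min d e by rewrite /t ltr_pdivrMr // ltr_pMr // ltr1n.
have tltd : t < d by apply: lt_le_trans tlt _; rewrite ge_min lexx.
have cont : forall a b, -t <= a -> b <= t -> {within `[a, b], continuous g}.
  move=> a b ha hb; apply: derivable_within_continuous => x /[!in_itv] /= /andP[xa xb].
  apply: (@ex_derive _ _ _ _ _ _ (q x)) => /=; apply: gder.
  rewrite ltr_norml; apply/andP; split.
    by apply: lt_le_trans (le_trans ha xa); rewrite ltrN2.
  by apply: le_lt_trans (le_trans xb hb) tltd.
have dr : forall a b, -t <= a -> b <= t -> forall x, x \in `]a, b[ -> is_derive x 1 g (q x).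
  move=> a b ha hb x /[!in_itv] /= /andP[xa xb]; apply: gder.
  rewrite ltr_norml; apply/andP; split.
    by apply: lt_le_trans (le_trans ha (ltW xa)); rewrite ltrN2.
  by apply: le_lt_trans (le_trans (ltW xb) hb) tltd.
have normlt : forall s, -t < s < t -> `|s| < d.
  move=> s /andP[a b]; rewrite ltr_norml; apply/andP; split.
    by apply: lt_trans a; rewrite ltrN2.
  exact: lt_trans tltd.
have nt0 : -t <= 0 by rewrite oppr_le0 ltW.
have Hs : forall s, -t < s < t -> s != 0 -> 0 < s^-1 * (q s - q 0).
  move=> s st sn0; apply: Hq; rewrite normr_gt0 sn0 /=.
  case/andP: st => a b; rewrite ltr_norml; apply/andP; split.
    by apply: le_lt_trans a; rewrite lerN2 ltW.
  exact: lt_trans tlt.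
case: (leP 0 (q 0)) => q0.
- have [s /[!in_itv] /= /andP[s0 st] E] := MVT t0 (dr 0 t nt0 (lexx t)) (cont 0 t nt0 (lexx t)).
  have := Hs s; rewrite st andbT (lt_le_trans _ (ltW s0)) ?oppr_lt0 // => /(_ isT (negbT (gt_eqF s0))).
  rewrite pmulr_rgt0 ?invr_gt0 // subr_gt0 => qs.
  have : 0 < g t - g 0 by rewrite E subr0 mulr_gt0 // (le_lt_trans q0 qs).
  rewrite subr_gt0 => /lt_geF; rewrite gmax //.
  by rewrite gtr0_norm.
- have mt0 : -t < 0 by rewrite oppr_lt0.
  have [s /[!in_itv] /= /andP[s0 st] E] := MVT mt0 (dr (-t) 0 (lexx _) (ltW t0)) (cont (-t) 0 (lexx _) (ltW t0)).
  have := Hs s; rewrite s0 (lt_trans st t0) => /(_ isT (negbT (lt_eqF st))).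
  rewrite nmulr_rgt0 ?invr_lt0 // subr_lt0 => qs.
  have : g 0 - g (-t) < 0 by rewrite E sub0r opprK pmulr_llt0 // (lt_trans qs q0).
  rewrite subr_lt0 => /lt_geF; rewrite gmax //.
  by rewrite normrN gtr0_norm.
Qed.

Section S.
Variables (R : realType) (V : normedModType R).

Lemma line_quot (f : V -> R) (x0 e : V) (t : R) :
  (fun h : R => h^-1 *: (((fun s : R => f (s *: e + x0)) \o shift t) (h *: (1:R)) - f (t *: e + x0)))
  = (fun h : R => h^-1 *: ((f \o shift (t *: e + x0)) (h *: e) - f (t *: e + x0))).
Proof.
apply/funext => h /=; congr (_ *: (f _ - _)).
rewrite scalerDl addrA; congr (_ *: _ + _ + _); exact: mulr1.
Qed.

Lemma line_derivable (f : V -> R) (x0 e : V) (t : R) :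
  derivable f (t *: e + x0) e ->
  derivable (fun s : R => f (s *: e + x0)) t 1 /\
  'D_1 (fun s : R => f (s *: e + x0)) t = 'D_e f (t *: e + x0).
Proof.
rewrite /derivable /derive line_quot => H; split => //.
Qed.

Lemma second_partial_max (A : set V) (F1 F2 : V -> R) (x0 e : V) :
  open A -> A x0 ->
  (forall y, A y -> F1 y - F2 y <= F1 x0 - F2 x0) ->
  (forall y, A y -> differentiable F1 y /\ differentiable F2 y) ->
  differentiable ('D_e F1) x0 -> differentiable ('D_e F2) x0 ->
  'D_e ('D_e F1) x0 - 'D_e ('D_e F2) x0 <= 0.
Proof.
move=> oA Ax0 Hmax Hd d1 d2.
have := @open_nbhs_nbhs _ x0 A (conj oA Ax0); move/nbhs_ballP => [r /= r0 Hr].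
set d := r / (`|e| + 1).
have d0 : 0 < d by rewrite divr_gt0 // ltr_wpDl.
have inA : forall t : R, `|t| < d -> A (t *: e + x0).
  move=> t td; apply: Hr; rewrite -ball_normE /= opprD addrCA subrr addr0 normrN normrZ.
  apply: (@le_lt_trans _ _ (`|t| * (`|e| + 1))).
    by rewrite ler_wpM2l // lerDl.
  by rewrite -ltr_pdivlMr // ltr_wpDl.
pose g t := F1 (t *: e + x0) - F2 (t *: e + x0).
pose q t := 'D_e F1 (t *: e + x0) - 'D_e F2 (t *: e + x0).
apply: (@key1d R g q _ d d0).
- move=> t /inA At; rewrite /g scale0r add0r; exact: Hmax.
- move=> t /inA At; have [D1 D2] := Hd _ At.
  have [l1 l1E] := @line_derivable F1 x0 e t (diff_derivable (v := e) D1).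
  have [l2 l2E] := @line_derivable F2 x0 e t (diff_derivable (v := e) D2).
  apply: DeriveDef.
    exact: derivableB l1 l2.
  by rewrite deriveB // l1E l2E.
- have dd1 := diff_derivable (v := e) d1.
  have dd2 := diff_derivable (v := e) d2.
  have dd := derivableB dd1 dd2.
  rewrite -deriveB //.
  have -> : (fun h => h^-1 * (q h - q 0)) = (fun h => h^-1 *: ((('D_e F1 - 'D_e F2) \o shift x0) (h *: e) - ('D_e F1 - 'D_e F2) x0)).
    by apply/funext => h; rewrite /q scale0r add0r.
  exact: dd.
Qed.
End S.

Lemma closure_bounded (R : realType) n (A : set 'rV[R]_n) :
  bounded_set A -> bounded_set (closure A).
Proof.
move=> [M [Mr HM]].
exists (Num.max M 0); split; first by rewrite num_real.
move=> M' MM' x cx.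
have M'0 : 0 < M' by apply: le_lt_trans MM'; rewrite le_max lexx orbT.
have MM : M < M' by apply: le_lt_trans MM'; rewrite le_max lexx.
have m1 : M < (M + M')/2 by rewrite midf_lt.
have m2 : (M + M')/2 < M' by rewrite midf_lt.
have sub : A `<=` ball (0 : 'rV[R]_n) M'.
  move=> y Ay; rewrite -ball_normE /= sub0r normrN.
  exact: le_lt_trans (HM _ m1 y Ay) m2.
have := closureS sub cx.
rewrite -/(closed_ball _ _) closed_ballE //=.
by rewrite /closed_ball_ /= distrC subr0.
Qed.

Lemma half (R : realType) (n : nat) (Omega : set 'rV[R]_n)
    (u U1 U2 : 'rV[R]_n -> R) :
  open Omega -> Omega !=set0 -> bounded_set Omega ->
  is_solution Omega u U1 -> is_solution Omega u U2 ->
  (Ipot Omega u U2 <= Ipot Omega u U1)%E ->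
  forall x, Omega x -> U1 x <= U2 x.
Proof.
move=> oO nO bO [C1 c1 b1 I1 e1] [C2 c2 b2 I2 e2] Ile x Ox.
rewrite leNgt; apply/negP => Hx.
have cK : compact (closure Omega).
  apply: bounded_closed_compact; [exact: closure_bounded | exact: closed_closure].
have nK : closure Omega !=set0.
  by case: nO => y Oy; exists y; apply: subset_closure.
have cW : {within closure Omega, continuous (U1 - U2)}.
  by move=> z; apply: cvgB; [exact: c1 | exact: c2].
have [c /set_mem Kc Hc] := EVT_max_rV nK cK cW.
have Wc : 0 < U1 c - U2 c.
  apply: lt_le_trans (Hc x _); first by rewrite subr_gt0.
  by apply: mem_set; apply: subset_closure.
have Oc : Omega c.
  apply: contrapT => nOc.
  by move: Wc; rewrite b1 // b2 // subrr ltxx.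
have lap : laplacian U1 c <= laplacian U2 c.
  rewrite -subr_le0 /laplacian -sumrB; apply: sumr_le0 => i _.
  case: C1 => D1 P1 _; case: C2 => D2 P2 _.
  apply: (@second_partial_max R _ Omega U1 U2 c (ebasis i)) => //.
  - move=> y Oy; apply: Hc; apply: mem_set; exact: subset_closure.
  - by move=> y Oy; split; [apply: D1|apply: D2].
  - exact: P1.
  - exact: P2.
have := e1 c Oc; have := e2 c Oc.
move: lap Ile I1 I2.
case: (Ipot Omega u U1) => [r1| |]; case: (Ipot Omega u U2) => [r2| |] //=.
2,3: by move=> _ _ /andP[_]; rewrite ltxx.
move=> lap le /andP[r1p _] /andP[r2p _] E2 E1.
rewrite lee_fin in le; rewrite lte_fin in r1p r2p.
have WW : U2 c < U1 c by rewrite -subr_gt0.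
have : expR (- (U1 c + u c)) / r1 < expR (- (U2 c + u c)) / r2.
  apply: (@lt_le_trans _ _ (expR (- (U2 c + u c)) / r1)).
    by rewrite ltr_pM2r ?invr_gt0 // ltr_expR ltrN2 ltrD2r.
  by rewrite ler_pM2l ?expR_gt0 // lef_pV2.
rewrite -E1 -E2 ltrN2 => /lt_geF; by rewrite lap.
Qed.

Arguments half {R n Omega u U1 U2}.

Theorem mainTheorem2 (R : realType) (n : nat) (Omega : set 'rV[R]_n)
    (u U1 U2 : 'rV[R]_n -> R) :
  bounded_convex_smooth_domain Omega ->
  is_solution Omega u U1 -> is_solution Omega u U2 ->
  (Ipot Omega u U2 <= Ipot Omega u U1)%E ->
  (forall x, Omega x -> U1 x <= U2 x) /\
  (Ipot Omega u U1 = Ipot Omega u U2 -> forall x, Omega x -> U1 x = U2 x).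
Proof.
move=> [[oO nO] _ bO _ _] s1 s2 Ile; split.
  exact: half oO nO bO s1 s2 Ile.
move=> E x Ox; apply: le_anti; rewrite (half oO nO bO s1 s2 Ile) //=.
by apply: (half oO nO bO s2 s1) => //; rewrite E.
Qed.
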